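(* Let $\Gamma:[0,1]\to\mathcal{D}$ be a continuous path, $s\in[0,1]$, and $H\le\Gamma_s$. Then for every $t\in[0,1]$, $J_{s,t}(H)\cap\mathrm{PSL}_2\mathbb{C}$ is a subgroup of $\Gamma_t$. If moreover $H$ is finitely generated, the map $\Psi:[0,1]\to\mathcal{D}$, $\Psi(t)=J_{s,t}(H)\cap\mathrm{PSL}_2\mathbb{C}$, is continuous in the geometric topology. In particular, if $J_{s,t}|_H$ is an injective homomorphism into $\mathrm{PSL}_2\mathbb{C}$ for all $t$ in an interval $I\subseteq[0,1]$, then $t\mapsto J_{s,t}|_H$ is a continuous path $I\to S(H)$ in the topology of strong convergence.
   Context: $\mathcal{D}$: discrete torsion-free subgroups of $\mathrm{PSL}_2\mathbb{C}$ with the Chabauty (geometric) topology ($\Gamma_n\to\Gamma$ iff accumulation points of sequences $\psi_n\in\Gamma_n$ lie in $\Gamma$ and each element of $\Gamma$ is a limit of some $\psi_n\in\Gamma_n$). For a path $\Gamma$ with $\Gamma_t=\Gamma(t)$, $s\in[0,1]$, $\psi\in\Gamma_s$: a $\Gamma$-path through $\psi$ based at $s$ is a continuous $j:I\to\mathrm{PSL}_2\mathbb{C}$, $I\subseteq[0,1]$ an interval containing $s$, with $j(t)\in\Gamma_t$ for $t\in I$ and $j(s)=\psi$. Any two such paths agree on the intersection of their domains, so there is a maximal such interval $I^s_\psi$, carrying the path $j^s_\psi$. With $\overline{\mathrm{PSL}_2\mathbb{C}}=\mathrm{PSL}_2\mathbb{C}\cup\{\infty\}$, define $J_{s,t}:\Gamma_s\to\overline{\mathrm{PSL}_2\mathbb{C}}$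 by $J_{s,t}(\psi)=j^s_\psi(t)$ if $t\in I^s_\psi$ and $\infty$ otherwise. For a Kleinian group $H$, $S(H)$ is the set of injective homomorphisms $\rho:H\to\mathrm{PSL}_2\mathbb{C}$ with discrete torsion-free image, topologized so that $\rho_n\to\rho$ iff $\rho_n(\psi)\to\rho(\psi)$ for every $\psi\in H$ and $\rho_n(H)\to\rho(H)$ in $\mathcal{D}$ (strong convergence). *)

(* Defs.v *)
From Stdlib Require Import Reals Lra List ClassicalEpsilon.
From Coquelicot Require Import Coquelicot.
Open Scope R_scope.

Definition M2 : Type := (C * C * C * C)%type.

Definition mk (a b c d : C) : M2 := (a, b, c, d).
Definition ea (A : M2) : C := fst (fst (fst A)).
Definition eb (A : M2) : C := snd (fst (fst A)).
Definition ec (A : M2) : C := snd (fst A).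
Definition ed (A : M2) : C := snd A.

Definition mid : M2 := mk (RtoC 1) (RtoC 0) (RtoC 0) (RtoC 1).
Definition mneg (A : M2) : M2 := mk (Copp (ea A)) (Copp (eb A)) (Copp (ec A)) (Copp (ed A)).
Definition madd (A B : M2) : M2 :=
  mk (Cplus (ea A) (ea B)) (Cplus (eb A) (eb B)) (Cplus (ec A) (ec B)) (Cplus (ed A) (ed B)).
Definition mmul (A B : M2) : M2 :=
  mk (Cplus (Cmult (ea A) (ea B)) (Cmult (eb A) (ec B)))
     (Cplus (Cmult (ea A) (eb B)) (Cmult (eb A) (ed B)))
     (Cplus (Cmult (ec A) (ea B)) (Cmult (ed A) (ec B)))
     (Cplus (Cmult (ec A) (eb B)) (Cmult (ed A) (ed B))).
(* inverse of a determinant-one matrix (the adjugate) *)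
Definition minv (A : M2) : M2 := mk (ed A) (Copp (eb A)) (Copp (ec A)) (ea A).
Definition det (A : M2) : C := Cminus (Cmult (ea A) (ed A)) (Cmult (eb A) (ec A)).
Fixpoint mpow (A : M2) (n : nat) : M2 :=
  match n with O => mid | S k => mmul A (mpow A k) end.

Definition SL (A : M2) : Prop := det A = RtoC 1.

(* equality in PSL_2(C) of two SL_2 representatives *)
Definition peq (A B : M2) : Prop := A = B \/ A = mneg B.

(* entrywise l1 norm; dP is a metric on PSL_2(C) inducing its usual topology *)
Definition mnorm (A : M2) : R := Cmod (ea A) + Cmod (eb A) + Cmod (ec A) + Cmod (ed A).
Definition dP (A B : M2) : R := Rmin (mnorm (madd A (mneg B))) (mnorm (madd A B)).

Definition pconv (u : nat -> M2) (g : M2) : Prop := is_lim_seq (fun n => dP (u n) g) 0.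

(* A subset of PSL_2(C) is represented by its (sign-closed) preimage in SL_2(C). *)
Definition PSub (G : M2 -> Prop) : Prop :=
  (forall A, G A -> SL A) /\
  G mid /\
  (forall A, G A -> G (mneg A)) /\
  (forall A B, G A -> G B -> G (mmul A B)) /\
  (forall A, G A -> G (minv A)).

Definition discreteP (G : M2 -> Prop) : Prop :=
  exists eps, 0 < eps /\ forall A, G A -> dP A mid < eps -> peq A mid.

Definition torsion_freeP (G : M2 -> Prop) : Prop :=
  forall A n, G A -> peq (mpow A (S n)) mid -> peq A mid.

Definition inD (G : M2 -> Prop) : Prop := PSub G /\ discreteP G /\ torsion_freeP G.

Definition FinGen (H : M2 -> Prop) : Prop :=
  exists l : list M2, (forall x, In x l -> H x) /\
    forall K, PSub K -> (forall x, In x l -> K x) -> forall g, H g -> K g.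

Definition chab_conv (Gs : nat -> M2 -> Prop) (G : M2 -> Prop) : Prop :=
  (forall (phi : nat -> nat) (psi : nat -> M2) (g : M2),
      (forall k, (phi k < phi (S k))%nat) -> (forall k, Gs (phi k) (psi k)) ->
      SL g -> pconv psi g -> G g) /\
  (forall g, G g -> exists psi : nat -> M2, (forall n, Gs n (psi n)) /\ pconv psi g).

Definition unit01 (t : R) : Prop := 0 <= t <= 1.

(* continuous path [0,1] -> D (the Chabauty topology on D is metrizable,
   so sequential continuity is continuity) *)
Definition DPath (Gam : R -> M2 -> Prop) : Prop :=
  (forall t, unit01 t -> inD (Gam t)) /\
  (forall (tn : nat -> R) (t : R), unit01 t -> (forall n, unit01 (tn n)) ->
     is_lim_seq tn t -> chab_conv (fun n => Gam (tn n)) (Gam t)).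

Definition sub_interval (I : R -> Prop) : Prop :=
  (forall t, I t -> unit01 t) /\ (forall x y z, I x -> I z -> x <= y <= z -> I y).

Definition GPath (Gam : R -> M2 -> Prop) (s : R) (psi : M2) (I : R -> Prop) (j : R -> M2) : Prop :=
  sub_interval I /\ I s /\
  (forall t, I t -> forall eps, 0 < eps -> exists delta, 0 < delta /\
      forall u, I u -> Rabs (u - t) < delta -> dP (j u) (j t) < eps) /\
  (forall t, I t -> Gam t (j t)) /\
  peq (j s) psi.

Definition GPathVal (Gam : R -> M2 -> Prop) (s t : R) (psi g : M2) : Prop :=
  exists I j, GPath Gam s psi I j /\ I t /\ g = j t.

(* J_{s,t}(psi): the value at t of the (unique) maximal Gamma-path through psi based at s,
   None standing for infinity. *)
Definition Jst (Gam : R -> M2 -> Prop) (s t : R) (psi : M2) : option M2 :=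
  match excluded_middle_informative (exists g, GPathVal Gam s t psi g) with
  | left e => Some (proj1_sig (constructive_indefinite_description _ e))
  | right _ => None
  end.

(* J_{s,t}(H) ∩ PSL_2(C), as a sign-closed subset of SL_2(C) *)
Definition JH (Gam : R -> M2 -> Prop) (s t : R) (H : M2 -> Prop) (g : M2) : Prop :=
  exists h, H h /\ exists g', Jst Gam s t h = Some g' /\ peq g g'.

Definition JInjHom (Gam : R -> M2 -> Prop) (s t : R) (H : M2 -> Prop) : Prop :=
  (forall h, H h -> exists g, Jst Gam s t h = Some g) /\
  (forall h1 h2 g1 g2 g12, H h1 -> H h2 ->
      Jst Gam s t h1 = Some g1 -> Jst Gam s t h2 = Some g2 ->
      Jst Gam s t (mmul h1 h2) = Some g12 -> peq g12 (mmul g1 g2)) /\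
  (forall h1 h2 g1 g2, H h1 -> H h2 ->
      Jst Gam s t h1 = Some g1 -> Jst Gam s t h2 = Some g2 -> peq g1 g2 -> peq h1 h2).

(* Main.v *)
Require Import Defs.
From Stdlib Require Import Reals Lra Lia ZArith List ClassicalEpsilon Classical.
From Coquelicot Require Import Coquelicot.
Open Scope R_scope.

Ltac dM A := let a := fresh "a" in let b := fresh "b" in let c := fresh "c" in let d := fresh "d" in destruct A as [[[a b] c] d].

Ltac meq := repeat match goal with |- (_,_) = (_,_) => f_equal end.
Lemma mmul_assoc A B C : mmul A (mmul B C) = mmul (mmul A B) C.
Proof. dM A; dM B; dM C; unfold mmul, mk, ea, eb, ec, ed; simpl; meq; ring. Qed.
Lemma mmul_mid_l A : mmul mid A = A.
Proof. dM A; unfold mmul, mid, mk, ea, eb, ec, ed; simpl; meq; ring. Qed.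
Lemma mmul_mid_r A : mmul A mid = A.
Proof. dM A; unfold mmul, mid, mk, ea, eb, ec, ed; simpl; meq; ring. Qed.
Lemma minv_l A : SL A -> mmul (minv A) A = mid.
Proof. dM A; unfold SL, det, mmul, minv, mid, mk, ea, eb, ec, ed; simpl; intro H.
  meq; try ring; rewrite <- H; unfold Cminus; ring. Qed.
Lemma minv_r A : SL A -> mmul A (minv A) = mid.
Proof. dM A; unfold SL, det, mmul, minv, mid, mk, ea, eb, ec, ed; simpl; intro H.
  meq; try ring; rewrite <- H; unfold Cminus; ring. Qed.
Lemma mneg_mmul_l A B : mmul (mneg A) B = mneg (mmul A B).
Proof. dM A; dM B; unfold mmul, mneg, mk, ea, eb, ec, ed; simpl; meq; ring. Qed.
Lemma mneg_mmul_r A B : mmul A (mneg B) = mneg (mmul A B).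
Proof. dM A; dM B; unfold mmul, mneg, mk, ea, eb, ec, ed; simpl; meq; ring. Qed.
Lemma mneg_inv A : mneg (mneg A) = A.
Proof. dM A; unfold mneg, mk, ea, eb, ec, ed; simpl; meq; ring. Qed.
Lemma minv_mneg A : minv (mneg A) = mneg (minv A).
Proof. dM A; unfold minv, mneg, mk, ea, eb, ec, ed; simpl; meq; ring. Qed.
Lemma minv_mmul A B : minv (mmul A B) = mmul (minv B) (minv A).
Proof. dM A; dM B; unfold mmul, minv, mk, ea, eb, ec, ed; simpl; meq; ring. Qed.
Lemma minv_inv A : minv (minv A) = A.
Proof. dM A; unfold minv, mk, ea, eb, ec, ed; simpl; meq; ring. Qed.
Lemma mpow_add A m n : mpow A (m + n) = mmul (mpow A m) (mpow A n).
Proof. induction m; simpl. now rewrite mmul_mid_l. rewrite IHm. apply mmul_assoc. Qed.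

Definition msub (A B : M2) := madd A (mneg B).
Lemma mnorm_ge0 A : 0 <= mnorm A.
Proof. unfold mnorm; pose proof (Cmod_ge_0 (ea A)); pose proof (Cmod_ge_0 (eb A));
  pose proof (Cmod_ge_0 (ec A)); pose proof (Cmod_ge_0 (ed A)); lra. Qed.
Lemma mnorm_add A B : mnorm (madd A B) <= mnorm A + mnorm B.
Proof. dM A; dM B; unfold mnorm, madd, mk, ea, eb, ec, ed; simpl.
  pose proof (Cmod_triangle a a0); pose proof (Cmod_triangle b b0);
  pose proof (Cmod_triangle c c0); pose proof (Cmod_triangle d d0); lra. Qed.
Lemma mnorm_neg A : mnorm (mneg A) = mnorm A.
Proof. dM A; unfold mnorm, mneg, mk, ea, eb, ec, ed; simpl; rewrite !Cmod_opp; lra. Qed.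
Lemma mnorm_minv A : mnorm (minv A) = mnorm A.
Proof. dM A; unfold mnorm, minv, mk, ea, eb, ec, ed; simpl; rewrite !Cmod_opp; lra. Qed.
Lemma mnorm_eq_le X Y Z : X = madd Y Z -> mnorm X <= mnorm Y + mnorm Z.
Proof. intros ->; apply mnorm_add. Qed.
Lemma mnorm_mid : mnorm mid = 2.
Proof. unfold mnorm, mid, mk, ea, eb, ec, ed; simpl. rewrite Cmod_1, Cmod_0; lra. Qed.
Lemma Cmod_pp x y z w : Cmod (Cplus (Cmult x y) (Cmult z w)) <= Cmod x * Cmod y + Cmod z * Cmod w.
Proof. eapply Rle_trans; [apply Cmod_triangle|]. rewrite !Cmod_mult. lra. Qed.
Lemma mnorm_mul A B : mnorm (mmul A B) <= mnorm A * mnorm B.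
Proof. dM A; dM B; unfold mnorm, mmul, mk, ea, eb, ec, ed; simpl.
  pose proof (Cmod_ge_0 a); pose proof (Cmod_ge_0 b); pose proof (Cmod_ge_0 c); pose proof (Cmod_ge_0 d);
  pose proof (Cmod_ge_0 a0); pose proof (Cmod_ge_0 b0); pose proof (Cmod_ge_0 c0); pose proof (Cmod_ge_0 d0).
  pose proof (Cmod_pp a a0 b c0); pose proof (Cmod_pp a b0 b d0); pose proof (Cmod_pp c a0 d c0); pose proof (Cmod_pp c b0 d d0).
  nra. Qed.
Lemma mnorm_zero A : mnorm A = 0 -> A = mk 0%C 0%C 0%C 0%C.
Proof. dM A; unfold mnorm, mk, ea, eb, ec, ed; simpl; intro H.
  pose proof (Cmod_ge_0 a); pose proof (Cmod_ge_0 b); pose proof (Cmod_ge_0 c); pose proof (Cmod_ge_0 d).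
  assert (Cmod a = 0) by lra; assert (Cmod b = 0) by lra; assert (Cmod c = 0) by lra; assert (Cmod d = 0) by lra.
  repeat match goal with h : Cmod ?x = 0 |- _ => apply Cmod_eq_0 in h; subst x end. reflexivity. Qed.

Lemma dP_ge0 A B : 0 <= dP A B.
Proof. unfold dP. apply Rmin_glb; apply mnorm_ge0. Qed.
Lemma dP_le1 A B : dP A B <= mnorm (madd A (mneg B)).
Proof. apply Rmin_l. Qed.
Lemma dP_le2 A B : dP A B <= mnorm (madd A B).
Proof. apply Rmin_r. Qed.
Lemma dP_cases A B : dP A B = mnorm (madd A (mneg B)) \/ dP A B = mnorm (madd A B).
Proof. unfold dP, Rmin. destruct Rle_dec; auto. Qed.
Lemma dP_negr A B : dP A (mneg B) = dP A B.
Proof. unfold dP. rewrite mneg_inv, Rmin_comm. reflexivity. Qed.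
Lemma dP_sym A B : dP A B = dP B A.
Proof. unfold dP. f_equal.
  - replace (madd A (mneg B)) with (mneg (madd B (mneg A))) by (dM A; dM B; unfold madd, mneg, mk, ea, eb, ec, ed; simpl; meq; ring).
    apply mnorm_neg.
  - f_equal. dM A; dM B; unfold madd, mneg, mk, ea, eb, ec, ed; simpl; meq; ring. Qed.
Lemma dP_negl A B : dP (mneg A) B = dP A B.
Proof. rewrite dP_sym, dP_negr, dP_sym. reflexivity. Qed.
Lemma dP_refl A : dP A A = 0.
Proof. apply Rle_antisym; [|apply dP_ge0]. eapply Rle_trans; [apply dP_le1|].
  replace (madd A (mneg A)) with (mk 0%C 0%C 0%C 0%C) by (dM A; unfold madd, mneg, mk, ea, eb, ec, ed; simpl; meq; ring).
  unfold mnorm, mk, ea, eb, ec, ed; simpl; rewrite Cmod_0; lra. Qed.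
Lemma dP_tri A B C : dP A C <= dP A B + dP B C.
Proof.
  assert (E1 : mnorm (madd A (mneg C)) <= mnorm (madd A (mneg B)) + mnorm (madd B (mneg C)))
    by (apply mnorm_eq_le; dM A; dM B; dM C; unfold madd, mneg, mk, ea, eb, ec, ed; simpl; meq; ring).
  assert (E2 : mnorm (madd A C) <= mnorm (madd A (mneg B)) + mnorm (madd B C))
    by (apply mnorm_eq_le; dM A; dM B; dM C; unfold madd, mneg, mk, ea, eb, ec, ed; simpl; meq; ring).
  assert (E3 : mnorm (madd A C) <= mnorm (madd A B) + mnorm (madd (mneg B) C))
    by (apply mnorm_eq_le; dM A; dM B; dM C; unfold madd, mneg, mk, ea, eb, ec, ed; simpl; meq; ring).
  replace (mnorm (madd (mneg B) C)) with (mnorm (madd B (mneg C))) in E3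
    by (rewrite <- mnorm_neg; f_equal; dM B; dM C; unfold madd, mneg, mk, ea, eb, ec, ed; simpl; meq; ring).
  assert (E4 : mnorm (madd A (mneg C)) <= mnorm (madd A B) + mnorm (madd (mneg B) (mneg C))).
  { apply mnorm_eq_le; dM A; dM B; dM C; unfold madd, mneg, mk, ea, eb, ec, ed; simpl; meq; ring. }
  replace (mnorm (madd (mneg B) (mneg C))) with (mnorm (madd B C)) in E4
    by (rewrite <- mnorm_neg; f_equal; dM B; dM C; unfold madd, mneg, mk, ea, eb, ec, ed; simpl; meq; ring).
  pose proof (dP_le1 A C); pose proof (dP_le2 A C).
  destruct (dP_cases A B) as [H1|H1]; destruct (dP_cases B C) as [H2|H2]; rewrite H1, H2; lra. Qed.
Lemma dP_peq A B : peq A B -> dP A B = 0.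
Proof. intros [->| ->]. apply dP_refl. rewrite dP_negl. apply dP_refl. Qed.
Lemma madd_neg_zero A B : madd A (mneg B) = mk 0%C 0%C 0%C 0%C -> A = B.
Proof. dM A; dM B; unfold madd, mneg, mk, ea, eb, ec, ed; simpl; intro H.
  assert (forall x y : C, Cplus x (Copp y) = 0%C -> x = y) as K.
  { intros x y h. replace x with (Cplus (Cplus x (Copp y)) y) by ring. rewrite h. ring. }
  pose proof (f_equal (fun X : M2 => fst (fst (fst X))) H) as H1;
  pose proof (f_equal (fun X : M2 => snd (fst (fst X))) H) as H2;
  pose proof (f_equal (fun X : M2 => snd (fst X)) H) as H3;
  pose proof (f_equal (fun X : M2 => snd X) H) as H4; simpl in *.
  rewrite (K _ _ H1), (K _ _ H2), (K _ _ H3), (K _ _ H4). reflexivity. Qed.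
Lemma dP0_peq A B : dP A B = 0 -> peq A B.
Proof. intro H. destruct (dP_cases A B) as [E|E]; rewrite E in H; apply mnorm_zero in H.
  - left. now apply madd_neg_zero.
  - right. apply madd_neg_zero. rewrite mneg_inv. exact H. Qed.
Lemma mnorm_le A B : mnorm A <= mnorm B + dP A B.
Proof. destruct (dP_cases A B) as [E|E]; rewrite E.
  - rewrite Rplus_comm. apply mnorm_eq_le. dM A; dM B; unfold madd, mneg, mk, ea, eb, ec, ed; simpl; meq; ring.
  - rewrite <- (mnorm_neg B), Rplus_comm. apply mnorm_eq_le. dM A; dM B; unfold madd, mneg, mk, ea, eb, ec, ed; simpl; meq; ring. Qed.
Lemma Rmin_mul_le x y a b c : 0 <= c -> x <= c * a -> y <= c * b -> Rmin x y <= c * Rmin a b.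
Proof. intros. unfold Rmin. destruct (Rle_dec x y), (Rle_dec a b); nra. Qed.
Lemma dP_mul_l C A B : dP (mmul C A) (mmul C B) <= mnorm C * dP A B.
Proof. unfold dP. apply Rmin_mul_le; [apply mnorm_ge0| |].
  - replace (madd (mmul C A) (mneg (mmul C B))) with (mmul C (madd A (mneg B)))
      by (dM A; dM B; dM C; unfold mmul, madd, mneg, mk, ea, eb, ec, ed; simpl; meq; ring). apply mnorm_mul.
  - replace (madd (mmul C A) (mmul C B)) with (mmul C (madd A B))
      by (dM A; dM B; dM C; unfold mmul, madd, mneg, mk, ea, eb, ec, ed; simpl; meq; ring). apply mnorm_mul. Qed.
Lemma dP_mul_r C A B : dP (mmul A C) (mmul B C) <= mnorm C * dP A B.
Proof. unfold dP. apply Rmin_mul_le; [apply mnorm_ge0| |].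
  - replace (madd (mmul A C) (mneg (mmul B C))) with (mmul (madd A (mneg B)) C)
      by (dM A; dM B; dM C; unfold mmul, madd, mneg, mk, ea, eb, ec, ed; simpl; meq; ring).
    rewrite Rmult_comm; apply mnorm_mul.
  - replace (madd (mmul A C) (mmul B C)) with (mmul (madd A B) C)
      by (dM A; dM B; dM C; unfold mmul, madd, mneg, mk, ea, eb, ec, ed; simpl; meq; ring).
    rewrite Rmult_comm; apply mnorm_mul. Qed.
Lemma dP_minv A B : dP (minv A) (minv B) = dP A B.
Proof. unfold dP. f_equal.
  - replace (madd (minv A) (mneg (minv B))) with (minv (madd A (mneg B)))
      by (dM A; dM B; unfold minv, madd, mneg, mk, ea, eb, ec, ed; simpl; meq; ring). apply mnorm_minv.
  - replace (madd (minv A) (minv B)) with (minv (madd A B))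
      by (dM A; dM B; unfold minv, madd, mneg, mk, ea, eb, ec, ed; simpl; meq; ring). apply mnorm_minv. Qed.
Lemma dP_peq_l A A' B : peq A A' -> dP A B = dP A' B.
Proof. intros [->| ->]; [reflexivity| apply dP_negl]. Qed.
Lemma dP_peq_r A B B' : peq B B' -> dP A B = dP A B'.
Proof. intros [->| ->]; [reflexivity| apply dP_negr]. Qed.
Lemma peq_sym A B : peq A B -> peq B A.
Proof. intros [->| ->]; [now left| right; now rewrite mneg_inv]. Qed.
Lemma peq_refl A : peq A A. Proof. now left. Qed.
Lemma peq_trans A B C : peq A B -> peq B C -> peq A C.
Proof. intros H1 H2. apply dP0_peq. pose proof (dP_tri A B C). rewrite (dP_peq _ _ H1), (dP_peq _ _ H2) in H.
  pose proof (dP_ge0 A C). lra. Qed.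
Lemma peq_mmul A A' B B' : peq A A' -> peq B B' -> peq (mmul A B) (mmul A' B').
Proof. intros [->| ->] [->| ->]; rewrite ?mneg_mmul_l, ?mneg_mmul_r, ?mneg_inv;
  first [now left | now right]. Qed.
Lemma peq_minv A A' : peq A A' -> peq (minv A) (minv A').
Proof. intros [->| ->]; [now left | right; apply minv_mneg]. Qed.

Lemma G_SL G A : PSub G -> G A -> SL A.
Proof. intros [h _] H; auto. Qed.
Lemma G_mid G : PSub G -> G mid.
Proof. intros (_&h&_); auto. Qed.
Lemma G_neg G A : PSub G -> G A -> G (mneg A).
Proof. intros (_&_&h&_); auto. Qed.
Lemma G_mul G A B : PSub G -> G A -> G B -> G (mmul A B).
Proof. intros (_&_&_&h&_); auto. Qed.
Lemma G_inv G A : PSub G -> G A -> G (minv A).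
Proof. intros (_&_&_&_&h); auto. Qed.
Lemma G_pow G A n : PSub G -> G A -> G (mpow A n).
Proof. intros P HA; induction n; simpl. now apply G_mid. now apply G_mul. Qed.
Lemma G_peq G A B : PSub G -> G A -> peq B A -> G B.
Proof. intros P HA [->| ->]; auto. now apply G_neg. Qed.
Lemma quot_peq a b : SL a -> peq (mmul (minv a) b) mid -> peq b a.
Proof. intros Ha Hq. assert (E : b = mmul a (mmul (minv a) b))
   by (rewrite mmul_assoc, minv_r, mmul_mid_l; auto).
  destruct Hq as [Hq|Hq]; rewrite Hq in E.
  - left. rewrite E. apply mmul_mid_r.
  - right. rewrite E, mneg_mmul_r, mmul_mid_r. reflexivity. Qed.
Lemma dP_quot a b : SL a -> dP (mmul (minv a) b) mid <= mnorm a * dP b a.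
Proof. intro Ha. pose proof (dP_mul_l (minv a) b a) as h. rewrite (minv_l a Ha), mnorm_minv in h. exact h. Qed.

Lemma small_inv eps : 0 < eps -> exists N, forall n, (N <= n)%nat -> / INR (S n) < eps.
Proof. intro He. destruct (archimed (/ eps)) as [H1 _].
  exists (Z.to_nat (up (/ eps))). intros n Hn.
  assert (IZR (up (/eps)) <= INR n).
  { destruct (Z_le_gt_dec 0 (up (/eps))) as [z|z].
    - rewrite <- (Z2Nat.id _ z), <- INR_IZR_INZ. now apply le_INR.
    - apply Rle_trans with 0. apply IZR_le; lia. apply pos_INR. }
  rewrite S_INR. pose proof (Rinv_0_lt_compat eps He).
  apply Rlt_le_trans with (/ (/ eps)). apply Rinv_lt_contravar. nra. lra.
  rewrite Rinv_inv; lra. Qed.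
Lemma inv_pos n : 0 < / INR (S n).
Proof. apply Rinv_0_lt_compat. apply lt_0_INR. lia. Qed.
Lemma inv_le n m : (n <= m)%nat -> / INR (S m) <= / INR (S n).
Proof. intro. apply Rinv_le_contravar. apply lt_0_INR; lia. apply le_INR; lia. Qed.

Definition SI (phi : nat -> nat) := forall k, (phi k < phi (S k))%nat.
Lemma SI_ge phi : SI phi -> forall k, (k <= phi k)%nat.
Proof. intros H k; induction k. lia. specialize (H k). lia. Qed.
Lemma SI_mono phi : SI phi -> forall a b, (a <= b)%nat -> (phi a <= phi b)%nat.
Proof. intros H a b Hab; induction Hab. lia. specialize (H m); lia. Qed.
Lemma SI_comp phi psi : SI phi -> SI psi -> SI (fun k => phi (psi k)).
Proof. intros H1 H2 k. specialize (H2 k). assert (S (psi k) <= psi (S k))%nat by lia.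
  apply SI_mono with (phi := phi) in H; auto. specialize (H1 (psi k)); lia. Qed.

Definition rconv (x : nat -> R) (l : R) := forall eps, 0 < eps -> exists N, forall k, (N <= k)%nat -> Rabs (x k - l) < eps.
Lemma rconv_sub x l psi : rconv x l -> SI psi -> rconv (fun k => x (psi k)) l.
Proof. intros H Hp eps He. destruct (H eps He) as [N HN]. exists N. intros k Hk.
  apply HN. pose proof (SI_ge psi Hp k); lia. Qed.

Lemma BW1 (x : nat -> R) B : (forall n, Rabs (x n) <= B) ->
  exists phi l, SI phi /\ rconv (fun k => x (phi k)) l.
Proof. intro HB.
  destruct (Bolzano_Weierstrass x (fun c => -B <= c <= B) (compact_P3 _ _)) as [l Hl].
  { intro n. specialize (HB n). apply Rabs_le_between in HB; lra. }
  assert (Hf : forall N k, exists p, (N <= p)%nat /\ Rabs (x p - l) < / INR (S k)).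
  { intros N k. destruct (Hl (fun y => Rabs (y - l) < / INR (S k)) N) as [p Hp].
    - exists (mkposreal _ (inv_pos k)). intros y Hy. exact Hy.
    - exists p; exact Hp. }
  pose (f := fun N k => proj1_sig (constructive_indefinite_description _ (Hf N k))).
  assert (Hfs : forall N k, (N <= f N k)%nat /\ Rabs (x (f N k) - l) < / INR (S k))
    by (intros; unfold f; destruct constructive_indefinite_description; auto).
  pose (phi := fix phi k := match k with O => f O O | S k' => f (S (phi k')) (S k') end).
  exists phi, l. split.
  - intro k. simpl. destruct (Hfs (S (phi k)) (S k)); lia.
  - intros eps He. destruct (small_inv eps He) as [N HN]. exists N. intros k Hk.
    assert (Rabs (x (phi k) - l) < / INR (S k)) by (destruct k; simpl; apply Hfs).
    specialize (HN k Hk). lra. Qed.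

Definition mconv (u : nat -> M2) (g : M2) := forall eps, 0 < eps -> exists N, forall k, (N <= k)%nat -> mnorm (madd (u k) (mneg g)) < eps.

Lemma Cmod_le_parts z : Cmod z <= 2 * (Rabs (fst z) + Rabs (snd z)).
Proof. eapply Rle_trans; [apply Cmod_2Rmax|].
  assert (sqrt 2 <= 2). { rewrite <- (sqrt_square 2) at 2 by lra. apply sqrt_le_1_alt. lra. }
  assert (Rmax (Rabs (fst z)) (Rabs (snd z)) <= Rabs (fst z) + Rabs (snd z)).
  { apply Rmax_lub; pose proof (Rabs_pos (fst z)); pose proof (Rabs_pos (snd z)); lra. }
  pose proof (sqrt_pos 2). pose proof (Rabs_pos (fst z)); pose proof (Rabs_pos (snd z)).
  assert (0 <= Rmax (Rabs (fst z)) (Rabs (snd z))) by (eapply Rle_trans; [apply Rabs_pos| apply Rmax_l]). nra. Qed.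
Lemma fst_le_Cmod z : Rabs (fst z) <= Cmod z.
Proof. apply (re_le_Cmod z). Qed.
Lemma snd_le_Cmod z : Rabs (snd z) <= Cmod z.
Proof. eapply Rle_trans; [|apply Rmax_Cmod]. apply Rmax_r. Qed.

Lemma BWstep (u : nat -> M2) B (f : M2 -> R) : (forall n, mnorm (u n) <= B) -> (forall A, Rabs (f A) <= mnorm A) ->
  exists phi l, SI phi /\ rconv (fun k => f (u (phi k))) l.
Proof. intros HB Hf. apply (BW1 (fun n => f (u n)) B). intro n. eapply Rle_trans; [apply Hf| apply HB]. Qed.

Lemma mnorm_ge_ea A : Cmod (ea A) <= mnorm A. Proof. unfold mnorm; pose proof (Cmod_ge_0 (eb A)); pose proof (Cmod_ge_0 (ec A)); pose proof (Cmod_ge_0 (ed A)); lra. Qed.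
Lemma mnorm_ge_eb A : Cmod (eb A) <= mnorm A. Proof. unfold mnorm; pose proof (Cmod_ge_0 (ea A)); pose proof (Cmod_ge_0 (ec A)); pose proof (Cmod_ge_0 (ed A)); lra. Qed.
Lemma mnorm_ge_ec A : Cmod (ec A) <= mnorm A. Proof. unfold mnorm; pose proof (Cmod_ge_0 (eb A)); pose proof (Cmod_ge_0 (ea A)); pose proof (Cmod_ge_0 (ed A)); lra. Qed.
Lemma mnorm_ge_ed A : Cmod (ed A) <= mnorm A. Proof. unfold mnorm; pose proof (Cmod_ge_0 (eb A)); pose proof (Cmod_ge_0 (ec A)); pose proof (Cmod_ge_0 (ea A)); lra. Qed.

Lemma mconv_of_coords v g :
  rconv (fun k => fst (ea (v k))) (fst (ea g)) -> rconv (fun k => snd (ea (v k))) (snd (ea g)) ->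
  rconv (fun k => fst (eb (v k))) (fst (eb g)) -> rconv (fun k => snd (eb (v k))) (snd (eb g)) ->
  rconv (fun k => fst (ec (v k))) (fst (ec g)) -> rconv (fun k => snd (ec (v k))) (snd (ec g)) ->
  rconv (fun k => fst (ed (v k))) (fst (ed g)) -> rconv (fun k => snd (ed (v k))) (snd (ed g)) ->
  mconv v g.
Proof. intros H1 H2 H3 H4 H5 H6 H7 H8 eps He.
  assert (He' : 0 < eps / 16) by lra.
  destruct (H1 _ He') as [N1 K1]; destruct (H2 _ He') as [N2 K2]; destruct (H3 _ He') as [N3 K3];
  destruct (H4 _ He') as [N4 K4]; destruct (H5 _ He') as [N5 K5]; destruct (H6 _ He') as [N6 K6];
  destruct (H7 _ He') as [N7 K7]; destruct (H8 _ He') as [N8 K8].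
  exists (N1+N2+N3+N4+N5+N6+N7+N8)%nat. intros k Hk.
  specialize (K1 k ltac:(lia)); specialize (K2 k ltac:(lia)); specialize (K3 k ltac:(lia)); specialize (K4 k ltac:(lia));
  specialize (K5 k ltac:(lia)); specialize (K6 k ltac:(lia)); specialize (K7 k ltac:(lia)); specialize (K8 k ltac:(lia)).
  unfold mnorm, madd, mneg, mk, ea, eb, ec, ed in *; simpl in *.
  repeat match goal with |- context [Cmod ?z] => let h := fresh in pose proof (Cmod_le_parts z) as h; simpl in h;
     revert h; generalize (Cmod z); intros ? ? end.
  unfold Rminus in *. lra. Qed.

Lemma rconv_uniq_helper : True. Proof. exact I. Qed.

Ltac solve_SI := repeat first [assumption | apply SI_comp; [assumption|]].
Lemma BWM (u : nat -> M2) B : (forall n, mnorm (u n) <= B) ->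
  exists phi g, SI phi /\ mconv (fun k => u (phi k)) g.
Proof. intro HB.
  destruct (BWstep u B (fun A => fst (ea A)) HB) as [p1 [l1 [S1 C1]]]. { intro; eapply Rle_trans; [apply fst_le_Cmod| apply mnorm_ge_ea]. }
  set (u1 := fun k => u (p1 k)). assert (B1 : forall n, mnorm (u1 n) <= B) by (intro; apply HB).
  destruct (BWstep u1 B (fun A => snd (ea A)) B1) as [p2 [l2 [S2 C2]]]. { intro; eapply Rle_trans; [apply snd_le_Cmod| apply mnorm_ge_ea]. }
  set (u2 := fun k => u1 (p2 k)). assert (B2 : forall n, mnorm (u2 n) <= B) by (intro; apply B1).
  destruct (BWstep u2 B (fun A => fst (eb A)) B2) as [p3 [l3 [S3 C3]]]. { intro; eapply Rle_trans; [apply fst_le_Cmod| apply mnorm_ge_eb]. }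
  set (u3 := fun k => u2 (p3 k)). assert (B3 : forall n, mnorm (u3 n) <= B) by (intro; apply B2).
  destruct (BWstep u3 B (fun A => snd (eb A)) B3) as [p4 [l4 [S4 C4]]]. { intro; eapply Rle_trans; [apply snd_le_Cmod| apply mnorm_ge_eb]. }
  set (u4 := fun k => u3 (p4 k)). assert (B4 : forall n, mnorm (u4 n) <= B) by (intro; apply B3).
  destruct (BWstep u4 B (fun A => fst (ec A)) B4) as [p5 [l5 [S5 C5]]]. { intro; eapply Rle_trans; [apply fst_le_Cmod| apply mnorm_ge_ec]. }
  set (u5 := fun k => u4 (p5 k)). assert (B5 : forall n, mnorm (u5 n) <= B) by (intro; apply B4).
  destruct (BWstep u5 B (fun A => snd (ec A)) B5) as [p6 [l6 [S6 C6]]]. { intro; eapply Rle_trans; [apply snd_le_Cmod| apply mnorm_ge_ec]. }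
  set (u6 := fun k => u5 (p6 k)). assert (B6 : forall n, mnorm (u6 n) <= B) by (intro; apply B5).
  destruct (BWstep u6 B (fun A => fst (ed A)) B6) as [p7 [l7 [S7 C7]]]. { intro; eapply Rle_trans; [apply fst_le_Cmod| apply mnorm_ge_ed]. }
  set (u7 := fun k => u6 (p7 k)). assert (B7 : forall n, mnorm (u7 n) <= B) by (intro; apply B6).
  destruct (BWstep u7 B (fun A => snd (ed A)) B7) as [p8 [l8 [S8 C8]]]. { intro; eapply Rle_trans; [apply snd_le_Cmod| apply mnorm_ge_ed]. }
  exists (fun k => p1 (p2 (p3 (p4 (p5 (p6 (p7 (p8 k)))))))).
  exists (mk (l1, l2) (l3, l4) (l5, l6) (l7, l8)). split.
  { solve_SI. }
  apply mconv_of_coords; unfold mk, ea, eb, ec, ed; simpl.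
  - apply (rconv_sub _ _ (fun k => p2 (p3 (p4 (p5 (p6 (p7 (p8 k)))))))) in C1. exact C1.
    solve_SI.
  - apply (rconv_sub _ _ (fun k => (p3 (p4 (p5 (p6 (p7 (p8 k)))))))) in C2. exact C2.
    solve_SI.
  - apply (rconv_sub _ _ (fun k => ((p4 (p5 (p6 (p7 (p8 k)))))))) in C3. exact C3.
    solve_SI.
  - apply (rconv_sub _ _ (fun k => (((p5 (p6 (p7 (p8 k)))))))) in C4. exact C4.
    solve_SI.
  - apply (rconv_sub _ _ (fun k => ((((p6 (p7 (p8 k)))))))) in C5. exact C5.
    solve_SI.
  - apply (rconv_sub _ _ (fun k => (((((p7 (p8 k)))))))) in C6. exact C6.
    solve_SI.
  - apply (rconv_sub _ _ (fun k => ((((((p8 k)))))))) in C7. exact C7. assumption.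
  - exact C8. Qed.

Lemma det_diff A B : Cmod (Cminus (det A) (det B)) <= mnorm (madd A (mneg B)) * (mnorm A + mnorm B).
Proof. dM A; dM B; unfold det, mnorm, madd, mneg, mk, ea, eb, ec, ed; simpl.
  replace (Cminus (Cminus (a*d) (b*c)) (Cminus (a0*d0) (b0*c0)))%C with
    (Cplus (Cplus ((a + - a0) * d) (a0 * (d + - d0))) (Cplus (Copp ((b + - b0) * c)) (Copp (b0 * (c + - c0)))))%C
    by (unfold Cminus; ring).
  eapply Rle_trans; [apply Cmod_triangle|].
  pose proof (Cmod_triangle ((a + - a0) * d) (a0 * (d + - d0)))%C.
  pose proof (Cmod_triangle (Copp ((b + - b0) * c)) (Copp (b0 * (c + - c0))))%C.
  rewrite !Cmod_opp, !Cmod_mult in *.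
  pose proof (Cmod_ge_0 a); pose proof (Cmod_ge_0 b); pose proof (Cmod_ge_0 c); pose proof (Cmod_ge_0 d);
  pose proof (Cmod_ge_0 a0); pose proof (Cmod_ge_0 b0); pose proof (Cmod_ge_0 c0); pose proof (Cmod_ge_0 d0);
  pose proof (Cmod_ge_0 (a + - a0)%C); pose proof (Cmod_ge_0 (b + - b0)%C); pose proof (Cmod_ge_0 (c + - c0)%C); pose proof (Cmod_ge_0 (d + - d0)%C).
  nra. Qed.

Lemma R_le_eps_0 x : 0 <= x -> (forall eps, 0 < eps -> x < eps) -> x = 0.
Proof. intros H1 H2. destruct (Req_dec x 0); auto. specialize (H2 x ltac:(lra)). lra. Qed.

Lemma SL_limit v g B : mconv v g -> (forall k, SL (v k)) -> (forall k, mnorm (v k) <= B) -> SL g.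
Proof. intros Hc HS HB. unfold SL.
  assert (Cmod (Cminus (RtoC 1) (det g)) = 0).
  { apply R_le_eps_0. apply Cmod_ge_0. intros eps He.
    assert (Hp : 0 < B + mnorm g + 1) by (pose proof (HB O); pose proof (mnorm_ge0 (v O)); pose proof (mnorm_ge0 g); lra).
    destruct (Hc (eps / (B + mnorm g + 1))) as [N HN]. apply Rdiv_lt_0_compat; lra.
    specialize (HN N (le_n _)). pose proof (det_diff (v N) g). rewrite (HS N) in H.
    specialize (HB N). pose proof (mnorm_ge0 (madd (v N) (mneg g))). pose proof (mnorm_ge0 (v N)).
    assert (mnorm (madd (v N) (mneg g)) * (mnorm (v N) + mnorm g) <= mnorm (madd (v N) (mneg g)) * (B + mnorm g + 1)) by nra.
    assert (mnorm (madd (v N) (mneg g)) * (B + mnorm g + 1) < eps).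
    { apply Rmult_lt_compat_r with (r := B + mnorm g + 1) in HN; auto. unfold Rdiv in HN.
      rewrite Rmult_assoc, Rinv_l, Rmult_1_r in HN; lra. }
    lra. }
  apply Cmod_eq_0 in H. replace (det g) with (Cplus (det g) (Cminus (RtoC 1) (det g))) by (rewrite H; ring).
  unfold Cminus; ring. Qed.

Lemma pconv_iff u g : pconv u g <-> (forall eps, 0 < eps -> exists N, forall n, (N <= n)%nat -> dP (u n) g < eps).
Proof. unfold pconv. rewrite <- is_lim_seq_spec. split.
  - intros H eps He. destruct (H (mkposreal eps He)) as [N HN]. exists N. intros n Hn.
    specialize (HN n Hn). simpl in HN. rewrite Rminus_0_r, Rabs_pos_eq in HN; auto. apply dP_ge0.
  - intros H eps. destruct (H eps (cond_pos eps)) as [N HN]. exists N. intros n Hn.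
    rewrite Rminus_0_r, Rabs_pos_eq; auto. apply dP_ge0. Qed.

Lemma mconv_pconv v g : mconv v g -> pconv v g.
Proof. intro H. apply pconv_iff. intros eps He. destruct (H eps He) as [N HN]. exists N; intros.
  eapply Rle_lt_trans; [apply dP_le1| auto]. Qed.

Lemma compact_SL (u : nat -> M2) B : (forall n, mnorm (u n) <= B) -> (forall n, SL (u n)) ->
  exists phi g, SI phi /\ SL g /\ pconv (fun k => u (phi k)) g.
Proof. intros HB HS. destruct (BWM u B HB) as [phi [g [S C]]]. exists phi, g. split; [auto|split].
  - apply (SL_limit _ g B C); intro; [apply HS| apply HB].
  - now apply mconv_pconv. Qed.

Lemma first_cross (P : nat -> Prop) : ~ P O -> forall k, P k -> exists j, ~ P j /\ P (S j).
Proof. intros H0 k; induction k; intro Hk. contradiction.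
  destruct (classic (P k)) as [Hp|Hp]. now apply IHk. now exists k. Qed.

Lemma lim_of_bound (u : nat -> R) t : (forall n, Rabs (u n - t) < / INR (S n)) -> is_lim_seq u t.
Proof. intro H. apply is_lim_seq_spec. intro eps. destruct (small_inv eps (cond_pos eps)) as [N HN].
  exists N. intros n Hn. specialize (H n). specialize (HN n Hn). lra. Qed.

Lemma mnorm_near_mid A e : dP A mid < e -> mnorm A <= 2 + e.
Proof. intro H. pose proof (mnorm_le A mid). rewrite mnorm_mid in H0. lra. Qed.

Lemma leave G g e : inD G -> G g -> ~ peq g mid -> 0 < e -> exists k, e <= dP (mpow g k) mid.
Proof. intros [P [[eG [HeG HD]] TF]] Hg Hng He.
  apply NNPP; intro Hn.
  assert (Hk : forall k, dP (mpow g k) mid < e).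
  { intro k. apply Rnot_le_lt. intro h. apply Hn. now exists k. }
  destruct (compact_SL (fun k => mpow g k) (2 + e)) as [phi [l [Sp [Sl Cl]]]].
  { intro n. apply mnorm_near_mid, Hk. }
  { intro n. apply (G_SL G); auto. now apply G_pow. }
  set (r := eG / (2 + e + 1)).
  assert (Hr : 0 < r) by (unfold r; apply Rdiv_lt_0_compat; lra).
  pose proof (proj1 (pconv_iff _ _) Cl) as Cl'; clear Cl; rename Cl' into Cl. destruct (Cl (r/2)) as [N HN]; [lra|].
  pose proof (HN N (le_n _)) as h1; pose proof (HN (S N) ltac:(lia)) as h2. simpl in h1, h2.
  set (a := phi N) in *; set (b := phi (S N)) in *.
  assert (Hab : (a < b)%nat) by apply Sp.
  assert (Hd : dP (mpow g b) (mpow g a) < r).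
  { pose proof (dP_tri (mpow g b) l (mpow g a)). rewrite (dP_sym l) in H. lra. }
  assert (SLa : SL (mpow g a)) by (apply (G_SL G); auto; now apply G_pow).
  pose proof (dP_quot (mpow g a) (mpow g b) SLa) as Hq.
  pose proof (mnorm_near_mid _ _ (Hk a)).
  assert (dP (mmul (minv (mpow g a)) (mpow g b)) mid < eG).
  { assert (mnorm (mpow g a) * dP (mpow g b) (mpow g a) <= (2 + e) * r).
    { apply Rmult_le_compat; auto using mnorm_ge0, dP_ge0; lra. }
    assert ((2 + e) * r < eG). { assert (r * (2 + e + 1) = eG) by (unfold r; field; lra). nra. }
    lra. }
  assert (Hx : peq (mmul (minv (mpow g a)) (mpow g b)) mid).
  { apply HD; auto. apply G_mul; auto. apply G_inv; auto; now apply G_pow. now apply G_pow. }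
  replace b with (a + S (b - a - 1))%nat in Hx by lia.
  rewrite mpow_add, mmul_assoc, minv_l, mmul_mid_l in Hx by auto.
  apply Hng. eapply TF; [exact Hg| exact Hx]. Qed.

Lemma unif_disc Gam t : DPath Gam -> unit01 t ->
  exists d h, 0 < d /\ 0 < h /\ forall u g, unit01 u -> Rabs (u - t) < h -> Gam u g -> dP g mid < d -> peq g mid.
Proof. intros [HD HC] Ht.
  destruct (HD t Ht) as [Pt [[eT [HeT DT]] TFt]].
  apply NNPP; intro Hn.
  assert (Hs : forall n, exists p : R * M2, unit01 (fst p) /\ Rabs (fst p - t) < / INR (S n) /\ Gam (fst p) (snd p)
                 /\ dP (snd p) mid < / INR (S n) /\ ~ peq (snd p) mid).
  { intro n. apply NNPP; intro Hn2. apply Hn. exists (/ INR (S n)), (/ INR (S n)).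
    split; [apply inv_pos|split; [apply inv_pos|]]. intros u g Hu H1 H2 H3. apply NNPP; intro H4.
    apply Hn2. exists (u, g). simpl. tauto. }
  pose (p := fun n => proj1_sig (constructive_indefinite_description _ (Hs n))).
  assert (Hp : forall n, unit01 (fst (p n)) /\ Rabs (fst (p n) - t) < / INR (S n) /\ Gam (fst (p n)) (snd (p n))
                 /\ dP (snd (p n)) mid < / INR (S n) /\ ~ peq (snd (p n)) mid)
    by (intro n; unfold p; destruct constructive_indefinite_description; auto).
  set (e := eT / 2).
  assert (He : 0 < e) by (unfold e; lra).
  assert (Hk : forall n, exists j, dP (mpow (snd (p n)) j) mid < e /\ e <= dP (mpow (snd (p n)) (S j)) mid).
  { intro n. destruct (Hp n) as (Hu & _ & Hg & _ & Hng).
    destruct (leave _ _ e (HD _ Hu) Hg Hng He) as [k Hk].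
    destruct (first_cross (fun j => e <= dP (mpow (snd (p n)) j) mid)) with k as [j [Hj1 Hj2]]; auto.
    - simpl. rewrite dP_refl. lra.
    - exists j. split; auto. lra. }
  pose (k := fun n => proj1_sig (constructive_indefinite_description _ (Hk n))).
  assert (Hkk : forall n, dP (mpow (snd (p n)) (k n)) mid < e /\ e <= dP (mpow (snd (p n)) (S (k n))) mid)
    by (intro n; unfold k; destruct constructive_indefinite_description; auto).
  pose (w := fun n => mpow (snd (p n)) (S (k n))).
  assert (Hw : forall n, dP (w n) mid < e + (2 + e) * / INR (S n)).
  { intro n. unfold w; cbn [mpow]. destruct (Hkk n) as [h1 _]. destruct (Hp n) as (_ & _ & _ & h2 & _).
    pose proof (dP_mul_r (mpow (snd (p n)) (k n)) (snd (p n)) mid) as h3. rewrite mmul_mid_l in h3.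
    pose proof (mnorm_near_mid _ _ h1). pose proof (dP_tri (mmul (snd (p n)) (mpow (snd (p n)) (k n))) (mpow (snd (p n)) (k n)) mid).
    pose proof (dP_ge0 (snd (p n)) mid).
    assert (mnorm (mpow (snd (p n)) (k n)) * dP (snd (p n)) mid <= (2 + e) * / INR (S n)).
    { apply Rmult_le_compat; auto using mnorm_ge0; lra. }
    lra. }
  destruct (compact_SL w (2 + (e + (2 + e) * 1))) as [phi [g [Sp [Sg Cg]]]].
  { intro n. pose proof (Hw n). assert (H0 : / INR (S n) <= 1) by (pose proof (inv_le O n ltac:(lia)) as q; change (INR 1) with 1 in q; rewrite Rinv_1 in q; exact q).
    pose proof (inv_pos n).
    assert (h9 : dP (w n) mid < e + (2 + e) * 1) by nra. apply mnorm_near_mid in h9. lra. }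
  { intro n. destruct (Hp n) as (Hu & _ & Hg & _ & _). apply (G_SL (Gam (fst (p n)))). apply HD; auto.
    apply G_pow; auto. apply HD; auto. }
  assert (Hlim : is_lim_seq (fun n => fst (p n)) t) by (apply lim_of_bound; intro; apply Hp).
  destruct (HC (fun n => fst (p n)) t Ht (fun n => proj1 (Hp n)) Hlim) as [Cl _].
  assert (Ggt : Gam t g).
  { apply (Cl phi (fun k => w (phi k)) g Sp); auto. intro j. unfold w.
    destruct (Hp (phi j)) as (Hu & _ & Hg & _ & _). apply G_pow; auto. apply HD; auto. }
  pose proof (proj1 (pconv_iff _ _) Cg) as Cg'; clear Cg; rename Cg' into Cg.
  destruct (Cg (e/4)) as [N1 HN1]; [lra|].
  assert (He2 : 0 < e / (4 * (2 + e))) by (apply Rdiv_lt_0_compat; lra).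
  destruct (small_inv _ He2) as [N2 HN2].
  set (N := (N1 + N2)%nat).
  specialize (HN1 N ltac:(unfold N; lia)). specialize (HN2 (phi N) ltac:(pose proof (SI_ge phi Sp N); unfold N in *; lia)).
  specialize (Hw (phi N)). destruct (Hkk (phi N)) as [_ Hlow]. fold (w (phi N)) in Hlow.
  assert ((2 + e) * / INR (S (phi N)) < e / 4).
  { assert ((2 + e) * (e / (4 * (2 + e))) = e / 4) by (field; lra). nra. }
  pose proof (dP_tri g (w (phi N)) mid). rewrite (dP_sym g (w (phi N))) in H0. cbv beta in HN1.
  assert (peq g mid) by (apply DT; auto; unfold e in *; lra).
  pose proof (dP_tri (w (phi N)) g mid). rewrite (dP_peq _ _ H1) in H2. lra. Qed.

Definition cont_on (I : R -> Prop) (j : R -> M2) := forall t, I t -> forall eps, 0 < eps -> exists delta, 0 < delta /\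
      forall u, I u -> Rabs (u - t) < delta -> dP (j u) (j t) < eps.
Definition Cpath (Gam : R -> M2 -> Prop) I j := sub_interval I /\ cont_on I j /\ (forall t, I t -> Gam t (j t)).

Lemma GPath_iff Gam s psi I j : GPath Gam s psi I j <-> (Cpath Gam I j /\ I s /\ peq (j s) psi).
Proof. unfold GPath, Cpath, cont_on. tauto. Qed.

Lemma LC_right (I P : R -> Prop) : (forall x y z, I x -> I z -> x <= y <= z -> I y) ->
  (forall x, I x -> exists h, 0 < h /\ forall v, I v -> Rabs (v - x) < h -> (P v <-> P x)) ->
  forall a b, a <= b -> I a -> I b -> P a -> P b.
Proof. intros Hconv Hloc a b Hab Ia Ib Pa.
  set (S := fun x => a <= x <= b /\ forall v, a <= v <= x -> P v).
  assert (Sa : S a) by (split; [lra| intros v Hv; replace v with a by lra; auto]).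
  destruct (completeness S) as [m [Hub Hlub]].
  { exists b. intros x [Hx _]. lra. }
  { exists a. exact Sa. }
  assert (ma : a <= m) by (apply Hub; auto).
  assert (mb : m <= b) by (apply Hlub; intros x [Hx _]; lra).
  assert (Im : I m) by (apply (Hconv a m b); auto).
  destruct (Hloc m Im) as [h [Hh Hl]].
  assert (Hx : exists x, S x /\ m - h < x).
  { apply NNPP; intro Hn. assert (m <= m - h). { apply Hlub. intros x Sx. apply Rnot_lt_le. intro. apply Hn. now exists x. } lra. }
  destruct Hx as [x [[[Hx1 Hx2] Px] Hxm]].
  assert (xm : x <= m) by (apply Hub; split; auto; lra).
  assert (Pm : P m).
  { apply (Hl x). apply (Hconv a x b); auto; lra. rewrite Rabs_left1 by lra. lra. apply Px; lra. }
  set (y := Rmin (m + h / 2) b).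
  assert (Sy : S y).
  { split. unfold y; split; [apply Rmin_glb; lra| apply Rmin_r].
    intros v Hv. destruct (Rle_dec v x). apply Px; lra.
    assert (v <= m + h / 2) by (eapply Rle_trans; [apply Hv| apply Rmin_l]).
    assert (v <= b) by (eapply Rle_trans; [apply Hv| apply Rmin_r]).
    apply (Hl v); auto. apply (Hconv a v b); auto; lra. apply Rabs_def1; lra. }
  assert (y <= m) by (apply Hub; auto).
  assert (m = b). { unfold y in H. unfold Rmin in H. destruct (Rle_dec (m + h/2) b); lra. }
  subst m. auto. Qed.

Lemma LC (I P : R -> Prop) : (forall x y z, I x -> I z -> x <= y <= z -> I y) ->
  (forall x, I x -> exists h, 0 < h /\ forall v, I v -> Rabs (v - x) < h -> (P v <-> P x)) ->
  forall a b, I a -> I b -> P a -> P b.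
Proof. intros Hconv Hloc a b Ia Ib Pa. destruct (Rle_dec a b).
  - eapply LC_right; eauto.
  - apply NNPP; intro Pb. apply (LC_right I (fun x => ~ P x)) with (a := b) (b := a); auto; try lra.
    intros x Ix. destruct (Hloc x Ix) as [h [Hh Hl]]. exists h. split; auto. intros v Iv Hv.
    specialize (Hl v Iv Hv). tauto. Qed.

Lemma Lq Gam x : DPath Gam -> unit01 x -> forall B, 0 < B -> exists r h, 0 < r /\ 0 < h /\
  forall v a b, unit01 v -> Rabs (v - x) < h -> Gam v a -> Gam v b -> mnorm a <= B -> dP a b < r -> peq a b.
Proof. intros HD Hx B HB. destruct (unif_disc Gam x HD Hx) as [d [h [Hd [Hh Hu]]]].
  exists (d / B), h. split; [apply Rdiv_lt_0_compat; auto| split; auto].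
  intros v a b Hv Hvx Ha Hb HaB Hab.
  destruct (proj1 HD v Hv) as [Pv _].
  apply peq_sym. apply quot_peq. apply (G_SL _ _ Pv Ha).
  apply (Hu v); auto. apply G_mul; auto. now apply G_inv.
  eapply Rle_lt_trans. apply dP_quot. apply (G_SL _ _ Pv Ha).
  rewrite dP_sym. assert (B * (d / B) = d) by (field; lra).
  pose proof (dP_ge0 a b). pose proof (mnorm_ge0 a). nra. Qed.

Lemma U Gam I1 I2 j1 j2 u0 : DPath Gam -> Cpath Gam I1 j1 -> Cpath Gam I2 j2 -> I1 u0 -> I2 u0 ->
  peq (j1 u0) (j2 u0) -> forall u, I1 u -> I2 u -> peq (j1 u) (j2 u).
Proof. intros HD [[S1 V1] [C1 G1]] [[S2 V2] [C2 G2]] a1 a2 Pa u b1 b2.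
  apply (LC (fun v => I1 v /\ I2 v) (fun v => peq (j1 v) (j2 v))) with (a := u0); auto.
  - intros x y z [] [] Hy. split; [apply (V1 x y z)| apply (V2 x y z)]; auto.
  - intros x [Ix1 Ix2]. destruct (classic (peq (j1 x) (j2 x))) as [Px|Px].
    + destruct (Lq Gam x HD (S1 x Ix1) (mnorm (j1 x) + 1)) as [r [h [Hr [Hh Hq]]]].
      { pose proof (mnorm_ge0 (j1 x)); lra. }
      set (e := Rmin 1 (r / 4)). assert (He : 0 < e) by (apply Rmin_pos; lra).
      assert (e <= 1) by apply Rmin_l. assert (e <= r / 4) by apply Rmin_r.
      destruct (C1 x Ix1 e He) as [d1 [Hd1 K1]]. destruct (C2 x Ix2 e He) as [d2 [Hd2 K2]].
      exists (Rmin h (Rmin d1 d2)). split. repeat apply Rmin_pos; auto.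
      intros v [Iv1 Iv2] Hv. split; auto. intros _.
      assert (Q0 : Rabs (v - x) < h) by (eapply Rlt_le_trans; [exact Hv| apply Rmin_l]).
      assert (Q1 : Rabs (v - x) < d1) by (eapply Rlt_le_trans; [exact Hv| eapply Rle_trans; [apply Rmin_r| apply Rmin_l]]).
      assert (Q2 : Rabs (v - x) < d2) by (eapply Rlt_le_trans; [exact Hv| eapply Rle_trans; [apply Rmin_r| apply Rmin_r]]).
      specialize (K1 v Iv1 Q1). specialize (K2 v Iv2 Q2).
      apply (Hq v); auto.
      * pose proof (mnorm_le (j1 v) (j1 x)). lra.
      * pose proof (dP_tri (j1 v) (j1 x) (j2 v)) as T1. pose proof (dP_tri (j1 x) (j2 x) (j2 v)) as T2.
        rewrite (dP_peq _ _ Px) in T2. rewrite (dP_sym (j2 x)) in T2. lra.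
    + assert (HD0 : 0 < dP (j1 x) (j2 x)).
      { destruct (Rle_lt_or_eq_dec 0 _ (dP_ge0 (j1 x) (j2 x))) as [h|h]; auto. exfalso; apply Px, dP0_peq; auto. }
      set (e := dP (j1 x) (j2 x) / 2). assert (He : 0 < e) by (unfold e; lra).
      destruct (C1 x Ix1 e He) as [d1 [Hd1 K1]]. destruct (C2 x Ix2 e He) as [d2 [Hd2 K2]].
      exists (Rmin d1 d2). split. apply Rmin_pos; auto.
      intros v [Iv1 Iv2] Hv. split; [| intro; contradiction]. intro Pv. exfalso.
      assert (Q1 : Rabs (v - x) < d1) by (eapply Rlt_le_trans; [exact Hv| apply Rmin_l]).
      assert (Q2 : Rabs (v - x) < d2) by (eapply Rlt_le_trans; [exact Hv| apply Rmin_r]).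
      specialize (K1 v Iv1 Q1). specialize (K2 v Iv2 Q2).
      pose proof (dP_tri (j1 x) (j1 v) (j2 x)) as T1. pose proof (dP_tri (j1 v) (j2 v) (j2 x)) as T2.
      rewrite (dP_peq _ _ Pv) in T2. rewrite (dP_sym (j1 x) (j1 v)) in T1. unfold e in *. lra. Qed.

Lemma abs_lt a b : Rabs a < b -> - b < a < b.
Proof. intro H. apply Rabs_def2 in H. lra. Qed.
Lemma abs_lt_i a b : - b < a < b -> Rabs a < b.
Proof. intro H. apply Rabs_def1; lra. Qed.

Definition glue (I1 : R -> Prop) (j1 j2 : R -> M2) : R -> M2 :=
  fun u => if excluded_middle_informative (I1 u) then j1 u else j2 u.
Lemma glue_l I1 j1 j2 u : I1 u -> glue I1 j1 j2 u = j1 u.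
Proof. intro H. unfold glue. destruct excluded_middle_informative; tauto. Qed.
Lemma glue_nl I1 j1 j2 u : ~ I1 u -> glue I1 j1 j2 u = j2 u.
Proof. intro H. unfold glue. destruct excluded_middle_informative; tauto. Qed.

Lemma glue_Cpath Gam I1 I2 j1 j2 w0 : Cpath Gam I1 j1 -> Cpath Gam I2 j2 -> I1 w0 -> I2 w0 ->
  (forall u, I1 u -> I2 u -> peq (j1 u) (j2 u)) -> Cpath Gam (fun u => I1 u \/ I2 u) (glue I1 j1 j2).
Proof. intros [[S1 V1] [C1 G1]] [[S2 V2] [C2 G2]] W1 W2 Hag. split; [split|split].
  - intros t [h|h]; auto.
  - intros x y z Hx Hz Hy. cbv beta in *.
    destruct Hx as [Hx|Hx], Hz as [Hz|Hz].
    + left; apply (V1 x y z); auto.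
    + destruct (Rle_dec y w0). destruct (Rle_dec x w0). left; apply (V1 x y w0); auto; lra.
      right; apply (V2 w0 y z); auto; lra. right; apply (V2 w0 y z); auto; lra.
    + destruct (Rle_dec y w0). destruct (Rle_dec x w0). right; apply (V2 x y w0); auto; lra.
      left; apply (V1 w0 y z); auto; lra. left; apply (V1 w0 y z); auto; lra.
    + right; apply (V2 x y z); auto.
  - intros x Hx eps He.
    destruct (classic (I1 x)) as [X1|X1]; destruct (classic (I2 x)) as [X2|X2].
    + destruct (C1 x X1 eps He) as [d1 [Hd1 K1]]. destruct (C2 x X2 eps He) as [d2 [Hd2 K2]].
      exists (Rmin d1 d2). split. apply Rmin_pos; auto. intros v Hv Hvx.
      rewrite (glue_l _ _ _ x X1). destruct (classic (I1 v)) as [Y1|Y1].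
      * rewrite glue_l by auto. apply K1; auto. eapply Rlt_le_trans; [exact Hvx| apply Rmin_l].
      * rewrite glue_nl by auto. destruct Hv as [|Y2]; [contradiction|].
        rewrite (dP_peq_r _ _ _ (Hag x X1 X2)). apply K2; auto. eapply Rlt_le_trans; [exact Hvx| apply Rmin_r].
    + destruct (C1 x X1 eps He) as [d1 [Hd1 K1]].
      assert (xw : x <> w0) by (intro; subst; contradiction).
      exists (Rmin d1 (Rabs (w0 - x))). split. apply Rmin_pos; auto. apply Rabs_pos_lt; lra. intros v Hv Hvx.
      rewrite (glue_l _ _ _ x X1). destruct (classic (I1 v)) as [Y1|Y1].
      * rewrite glue_l by auto. apply K1; auto. eapply Rlt_le_trans; [exact Hvx| apply Rmin_l].
      * exfalso. destruct Hv as [|Y2]; [contradiction|].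
        assert (Hl : Rabs (v - x) < Rabs (w0 - x)) by (eapply Rlt_le_trans; [exact Hvx| apply Rmin_r]).
        apply abs_lt in Hl. unfold Rabs in Hl. destruct (Rcase_abs (w0 - x)).
        { destruct (Rle_dec v x). apply Y1, (V1 w0 v x); auto; lra. apply X2, (V2 w0 x v); auto; lra. }
        { destruct (Rle_dec x v). apply Y1, (V1 x v w0); auto; lra. apply X2, (V2 v x w0); auto; lra. }
    + destruct (C2 x X2 eps He) as [d2 [Hd2 K2]].
      assert (xw : x <> w0) by (intro; subst; contradiction).
      exists (Rmin d2 (Rabs (w0 - x))). split. apply Rmin_pos; auto. apply Rabs_pos_lt; lra. intros v Hv Hvx.
      rewrite (glue_nl _ _ _ x X1).
      assert (Q2 : Rabs (v - x) < d2) by (eapply Rlt_le_trans; [exact Hvx| apply Rmin_l]).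
      destruct (classic (I1 v)) as [Y1|Y1].
      * rewrite glue_l by auto.
        assert (Y2 : I2 v).
        { assert (Hl : Rabs (v - x) < Rabs (w0 - x)) by (eapply Rlt_le_trans; [exact Hvx| apply Rmin_r]).
          apply abs_lt in Hl. unfold Rabs in Hl. destruct (Rcase_abs (w0 - x)).
          { destruct (Rle_dec v x). apply (V2 w0 v x); auto; lra. exfalso; apply X1, (V1 w0 x v); auto; lra. }
          { destruct (Rle_dec x v). apply (V2 x v w0); auto; lra. exfalso; apply X1, (V1 v x w0); auto; lra. } }
        rewrite (dP_peq_l _ _ _ (Hag v Y1 Y2)). apply K2; auto.
      * rewrite glue_nl by auto. destruct Hv as [|Y2]; [contradiction|]. apply K2; auto.
    + exfalso. destruct Hx; contradiction.
  - intros t Ht; unfold glue; destruct excluded_middle_informative as [i|i]; [auto| destruct Ht; [contradiction| auto]]. Qed.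

Lemma glue_r (I1 I2 : R -> Prop) j1 j2 u : (forall u, I1 u -> I2 u -> peq (j1 u) (j2 u)) -> I2 u -> peq (glue I1 j1 j2 u) (j2 u).
Proof. intros Hag H. unfold glue. destruct excluded_middle_informative; auto using peq_refl. Qed.

Lemma seq_cont (D : R -> Prop) (u0 : R) (Good : R -> Prop) :
  (forall v : nat -> R, (forall n, D (v n)) -> is_lim_seq v u0 -> exists N, Good (v N)) ->
  exists d, 0 < d /\ forall v, D v -> Rabs (v - u0) < d -> Good v.
Proof. intro H. apply NNPP; intro Hn.
  assert (Hs : forall n, exists v, D v /\ Rabs (v - u0) < / INR (S n) /\ ~ Good v).
  { intro n. apply NNPP; intro Hn2. apply Hn. exists (/ INR (S n)). split. apply inv_pos.
    intros v Dv Hv. apply NNPP; intro. apply Hn2. exists v. tauto. }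
  pose (w := fun n => proj1_sig (constructive_indefinite_description _ (Hs n))).
  assert (Hw : forall n, D (w n) /\ Rabs (w n - u0) < / INR (S n) /\ ~ Good (w n))
    by (intro n; unfold w; destruct constructive_indefinite_description; auto).
  destruct (H w) as [N HN]. intro; apply Hw. apply lim_of_bound; intro; apply Hw.
  apply (Hw N); auto. Qed.

Lemma ext Gam t g : DPath Gam -> unit01 t -> Gam t g ->
  exists h l, 0 < h /\ Cpath Gam (fun u => unit01 u /\ Rabs (u - t) < h) l /\ peq (l t) g.
Proof. intros HD Ht Hg.
  destruct (Lq Gam t HD Ht (mnorm g + 1)) as [r [h0 [Hr [Hh0 Hq]]]]. { pose proof (mnorm_ge0 g); lra. }
  set (rho := Rmin (1/2) (r/4)).
  assert (Hrho : 0 < rho) by (apply Rmin_pos; lra).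
  assert (rho <= 1/2) by apply Rmin_l. assert (rho <= r/4) by apply Rmin_r.
  destruct (seq_cont unit01 t (fun u => exists a, Gam u a /\ dP a g < rho)) as [h1 [Hh1 Ex]].
  { intros v Hv Hlim. destruct (proj2 HD v t Ht Hv Hlim) as [_ C2]. destruct (C2 g Hg) as [psi [Hpsi Cpsi]].
    pose proof (proj1 (pconv_iff _ _) Cpsi) as Cpsi'; clear Cpsi; rename Cpsi' into Cpsi. destruct (Cpsi rho Hrho) as [N HN]. exists N, (psi N). split; auto. }
  set (h := Rmin h0 h1). assert (Hh : 0 < h) by (apply Rmin_pos; auto).
  assert (hh0 : h <= h0) by apply Rmin_l. assert (hh1 : h <= h1) by apply Rmin_r.
  pose (l := fun u => epsilon (inhabits mid) (fun a => Gam u a /\ dP a g < rho)).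
  assert (Hl : forall u, unit01 u -> Rabs (u - t) < h -> Gam u (l u) /\ dP (l u) g < rho).
  { intros u Hu Hut. unfold l. apply epsilon_spec. apply Ex; auto. lra. }
  assert (Un : forall u a b, unit01 u -> Rabs (u - t) < h -> Gam u a -> Gam u b -> dP a g < 2 * rho -> dP b g < 2 * rho -> peq a b).
  { intros u a b Hu Hut Ha Hb Hag Hbg. apply (Hq u); auto. lra.
    pose proof (mnorm_le a g); lra. pose proof (dP_tri a g b). rewrite (dP_sym g b) in H1. lra. }
  exists h, l. split; auto. split; [split; [split|split]|].
  - intros u [Hu _]; auto.
  - intros x y z [Hx Hxt] [Hz Hzt] Hy. destruct Hx, Hz. split. split; lra.
    apply abs_lt in Hxt; apply abs_lt in Hzt. apply abs_lt_i; lra.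
  - intros u0 [Hu0 Hu0t] eps He.
    destruct (seq_cont (fun u => unit01 u /\ Rabs (u - t) < h) u0 (fun v => dP (l v) (l u0) < eps)) as [d [Hd K]].
    + intros v Hv Hlim. destruct (proj2 HD v u0 Hu0 (fun n => proj1 (Hv n)) Hlim) as [_ C2].
      destruct (Hl u0 Hu0 Hu0t) as [G0 D0].
      destruct (C2 (l u0) G0) as [psi [Hpsi Cpsi]].
      pose proof (proj1 (pconv_iff _ _) Cpsi) as Cpsi'; clear Cpsi; rename Cpsi' into Cpsi. destruct (Cpsi (Rmin eps rho)) as [N HN]. apply Rmin_pos; auto.
      specialize (HN N (le_n _)). exists N.
      destruct (Hv N) as [HvN HvNt]. destruct (Hl _ HvN HvNt) as [GN DN].
      assert (HN1 : dP (psi N) (l u0) < eps) by (eapply Rlt_le_trans; [exact HN| apply Rmin_l]).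
      assert (HN2 : dP (psi N) (l u0) < rho) by (eapply Rlt_le_trans; [exact HN| apply Rmin_r]).
      assert (peq (psi N) (l (v N))).
      { apply (Un (v N)); auto. pose proof (dP_tri (psi N) (l u0) g). lra. lra. }
      rewrite <- (dP_peq_l _ _ _ H1). exact HN1.
    + exists d. split; auto.
  - intros u [Hu Hut]. apply Hl; auto.
  - destruct (Hl t Ht) as [Gt Dt]. rewrite Rminus_diag, Rabs_R0; auto.
    apply (Un t); auto. rewrite Rminus_diag, Rabs_R0; auto. lra. rewrite dP_refl. lra. Qed.

Lemma Jst_spec Gam s t h g : Jst Gam s t h = Some g -> GPathVal Gam s t h g.
Proof. unfold Jst. destruct excluded_middle_informative as [e|e]; [|discriminate].
  intro E. injection E as <-. destruct constructive_indefinite_description; auto. Qed.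
Lemma Jst_def Gam s t h g : GPathVal Gam s t h g -> exists g', Jst Gam s t h = Some g'.
Proof. intro H. unfold Jst. destruct excluded_middle_informative as [e|e]. eexists; reflexivity.
  exfalso; apply e; eauto. Qed.
Lemma GPV_uniq Gam s t h g1 g2 : DPath Gam -> GPathVal Gam s t h g1 -> GPathVal Gam s t h g2 -> peq g1 g2.
Proof. intros HD [I1 [j1 [P1 [T1 ->]]]] [I2 [j2 [P2 [T2 ->]]]].
  apply GPath_iff in P1; apply GPath_iff in P2. destruct P1 as [C1 [S1 E1]], P2 as [C2 [S2 E2]].
  apply (U Gam I1 I2 j1 j2 s); auto. eapply peq_trans; [exact E1| apply peq_sym; exact E2]. Qed.
Lemma JH_of_path Gam s t H h I j g : DPath Gam -> H h -> GPath Gam s h I j -> I t -> peq g (j t) -> JH Gam s t H g.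
Proof. intros HD Hh P It E. exists h. split; auto.
  assert (V : GPathVal Gam s t h (j t)) by (exists I, j; auto).
  destruct (Jst_def _ _ _ _ _ V) as [g' Hg']. exists g'. split; auto.
  eapply peq_trans; [exact E|]. apply (GPV_uniq Gam s t h); auto. now apply Jst_spec. Qed.
Lemma JH_path Gam s t H g : JH Gam s t H g -> exists h I j, H h /\ GPath Gam s h I j /\ I t /\ peq g (j t).
Proof. intros [h [Hh [g' [E P]]]]. apply Jst_spec in E. destruct E as [I [j [Pj [It ->]]]].
  exists h, I, j. auto. Qed.

Lemma extend_path Gam s h I j t : DPath Gam -> GPath Gam s h I j -> I t ->
  exists e J K, 0 < e /\ GPath Gam s h K J /\ (forall u, unit01 u -> Rabs (u - t) < e -> K u) /\ (forall u, I u -> peq (J u) (j u)).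
Proof. intros HD P It. apply GPath_iff in P. destruct P as [C [Is E]].
  assert (Ut : unit01 t) by (apply (proj1 (proj1 C)); auto).
  destruct (ext Gam t (j t) HD Ut) as [e [l [He [Cl El]]]]. { apply (proj2 (proj2 C)); auto. }
  assert (Dt : unit01 t /\ Rabs (t - t) < e) by (rewrite Rminus_diag, Rabs_R0; auto).
  assert (Hag : forall u, I u -> (unit01 u /\ Rabs (u - t) < e) -> peq (j u) (l u)).
  { apply (U Gam I _ j l t HD C Cl It Dt). now apply peq_sym. }
  exists e, (glue I j l), (fun u => I u \/ (unit01 u /\ Rabs (u - t) < e)). split; auto. split; [|split].
  - apply GPath_iff. split. apply (glue_Cpath Gam I _ j l t); auto. split. now left. rewrite glue_l; auto.
  - intros; right; auto.
  - intros u Iu. rewrite glue_l; auto. apply peq_refl. Qed.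

Lemma lim_eps (tn : nat -> R) (t : R) : is_lim_seq tn t -> forall eps, 0 < eps -> exists N, forall n, (N <= n)%nat -> Rabs (tn n - t) < eps.
Proof. intros H eps He. apply is_lim_seq_spec in H. unfold is_lim_seq' in H. destruct (H (mkposreal eps He)) as [N HN]. exists N. intros n Hn. apply (HN n Hn). Qed.

Lemma cont_mul I1 I2 j1 j2 : cont_on I1 j1 -> cont_on I2 j2 -> cont_on (fun u => I1 u /\ I2 u) (fun u => mmul (j1 u) (j2 u)).
Proof. intros C1 C2 t [I1t I2t] eps He.
  set (B1 := mnorm (j1 t) + 1). set (M := mnorm (j2 t)).
  assert (0 <= mnorm (j1 t)) by apply mnorm_ge0. assert (0 <= M) by apply mnorm_ge0.
  set (e := Rmin 1 (eps / (2 * (B1 + M + 1)))).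
  assert (He' : 0 < e) by (apply Rmin_pos; [lra| apply Rdiv_lt_0_compat; unfold B1; lra]).
  assert (e1 : e <= 1) by apply Rmin_l. assert (e2 : e <= eps / (2 * (B1 + M + 1))) by apply Rmin_r.
  assert (e3 : e * (B1 + M + 1) <= eps / 2).
  { assert (eps / (2 * (B1 + M + 1)) * (B1 + M + 1) = eps / 2) by (field; unfold B1; lra). unfold B1 in *; nra. }
  destruct (C1 t I1t e He') as [d1 [Hd1 K1]]. destruct (C2 t I2t e He') as [d2 [Hd2 K2]].
  exists (Rmin d1 d2). split. apply Rmin_pos; auto. intros v [I1v I2v] Hv.
  specialize (K1 v I1v ltac:(eapply Rlt_le_trans; [exact Hv| apply Rmin_l])).
  specialize (K2 v I2v ltac:(eapply Rlt_le_trans; [exact Hv| apply Rmin_r])).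
  pose proof (dP_tri (mmul (j1 v) (j2 v)) (mmul (j1 v) (j2 t)) (mmul (j1 t) (j2 t))).
  pose proof (dP_mul_l (j1 v) (j2 v) (j2 t)). pose proof (dP_mul_r (j2 t) (j1 v) (j1 t)).
  pose proof (mnorm_le (j1 v) (j1 t)). pose proof (mnorm_ge0 (j1 v)).
  pose proof (dP_ge0 (j2 v) (j2 t)). pose proof (dP_ge0 (j1 v) (j1 t)).
  assert (mnorm (j1 v) * dP (j2 v) (j2 t) <= B1 * e) by (apply Rmult_le_compat; unfold B1; lra).
  assert (mnorm (j2 t) * dP (j1 v) (j1 t) <= M * e) by (fold M; apply Rmult_le_compat_l; lra).
  nra. Qed.

Lemma part1 Gam s H : DPath Gam -> unit01 s -> PSub H -> (forall h, H h -> Gam s h) ->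
  forall t, unit01 t -> PSub (JH Gam s t H) /\ (forall g, JH Gam s t H g -> Gam t g).
Proof. intros HD Hs HP HHs t Ht.
  assert (Sub : forall g, JH Gam s t H g -> Gam t g).
  { intros g Hg. destruct (JH_path _ _ _ _ _ Hg) as [h [I [j [Hh [P [It E]]]]]].
    apply GPath_iff in P. destruct P as [[_ [_ G]] _].
    apply (G_peq (Gam t) (j t)); auto. apply (proj1 HD t Ht). }
  split; auto.
  assert (PG : PSub (Gam t)) by apply (proj1 HD t Ht).
  split; [|split; [|split; [|split]]].
  - intros A HA. apply (G_SL (Gam t)); auto.
  - apply (JH_of_path Gam s t H mid unit01 (fun _ => mid)); auto.
    + apply G_mid; auto.
    + apply GPath_iff. split; [|split; auto using peq_refl]. split; [split|split].
      * auto.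
      * intros x y z [] [] Hy; split; lra.
      * intros u Hu eps He. exists 1. split; [lra|]. intros. rewrite dP_refl; auto.
      * intros u Hu. apply G_mid. apply (proj1 HD u Hu).
    + apply peq_refl.
  - intros A HA. destruct (JH_path _ _ _ _ _ HA) as [h [I [j [Hh [P [It E]]]]]].
    apply (JH_of_path Gam s t H h I j); auto.
    destruct E as [E|E]; rewrite E. now right. left; apply mneg_inv.
  - intros A B HA HB.
    destruct (JH_path _ _ _ _ _ HA) as [h1 [I1 [j1 [Hh1 [P1 [It1 E1]]]]]].
    destruct (JH_path _ _ _ _ _ HB) as [h2 [I2 [j2 [Hh2 [P2 [It2 E2]]]]]].
    apply GPath_iff in P1, P2. destruct P1 as [[[S1 V1] [C1 G1]] [Is1 F1]]. destruct P2 as [[[S2 V2] [C2 G2]] [Is2 F2]].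
    apply (JH_of_path Gam s t H (mmul h1 h2) (fun u => I1 u /\ I2 u) (fun u => mmul (j1 u) (j2 u))); auto.
    + apply G_mul; auto.
    + apply GPath_iff. split; [split; [split|split]|split].
      * intros u [Hu _]; auto.
      * intros x y z [] [] Hy. split; [apply (V1 x y z)| apply (V2 x y z)]; auto.
      * apply cont_mul; auto.
      * intros u [Hu1 Hu2]. apply G_mul; auto. apply (proj1 HD u (S1 u Hu1)).
      * hnf; split; auto.
      * apply peq_mmul; auto.
    + apply peq_mmul; auto.
  - intros A HA. destruct (JH_path _ _ _ _ _ HA) as [h [I [j [Hh [P [It E]]]]]].
    apply GPath_iff in P. destruct P as [[[S1 V1] [C1 G1]] [Is F]].
    apply (JH_of_path Gam s t H (minv h) I (fun u => minv (j u))); auto.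
    + apply G_inv; auto.
    + apply GPath_iff. split; [split; [split|split]|split]; auto.
      * intros u Iu eps He. destruct (C1 u Iu eps He) as [d [Hd K]]. exists d; split; auto.
        intros v Iv Hv. rewrite dP_minv. auto.
      * intros u Iu. apply G_inv; auto. apply (proj1 HD u (S1 u Iu)).
      * apply peq_minv; auto.
    + apply peq_minv; auto. Qed.

Lemma part2 Gam s H : DPath Gam -> unit01 s -> PSub H -> (forall h, H h -> Gam s h) ->
  (forall t, unit01 t -> inD (JH Gam s t H)) /\
  (forall (tn : nat -> R) (t : R), unit01 t -> (forall n, unit01 (tn n)) ->
          is_lim_seq tn t -> chab_conv (fun n => JH Gam s (tn n) H) (JH Gam s t H)).
Proof. intros HD Hs HP HHs. pose proof (part1 Gam s H HD Hs HP HHs) as P1. split.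
  - intros t Ht. destruct (P1 t Ht) as [PS Sub]. split; auto.
    destruct (proj1 HD t Ht) as [_ [[e [He Dt]] TF]]. split.
    + exists e. split; [auto|]. intros A HA Hd. apply Dt; auto.
    + intros A n HA Hp. apply (TF A n); auto.
  - intros tn t Ht Htn Hlim. split.
    + intros phi psi g Sp Hpsi Sg Cpsi.
      assert (Ggt : Gam t g).
      { apply (proj1 (proj2 HD tn t Ht Htn Hlim) phi psi g Sp); auto.
        intro k. apply (proj2 (P1 _ (Htn (phi k)))); auto. }
      destruct (ext Gam t g HD Ht Ggt) as [eta [l [Heta [Cl El]]]].
      destruct (Lq Gam t HD Ht (mnorm g + 1)) as [r [h0 [Hr [Hh0 Hq]]]]. { pose proof (mnorm_ge0 g); lra. }
      set (e := Rmin (1/2) (r/4)). assert (He : 0 < e) by (apply Rmin_pos; lra).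
      assert (e <= 1/2) by apply Rmin_l. assert (e <= r/4) by apply Rmin_r.
      assert (Dt : unit01 t /\ Rabs (t - t) < eta) by (rewrite Rminus_diag, Rabs_R0; auto).
      destruct (proj1 (proj2 Cl) t Dt e He) as [dl [Hdl Kl]].
      set (m := Rmin eta (Rmin h0 dl)). assert (Hm : 0 < m) by (repeat apply Rmin_pos; auto).
      destruct (lim_eps tn t Hlim m Hm) as [N1 HN1].
      pose proof (proj1 (pconv_iff _ _) Cpsi) as Cp. destruct (Cp e He) as [N2 HN2].
      set (k := (N1 + N2)%nat). set (u := tn (phi k)).
      assert (Hu : Rabs (u - t) < m) by (apply HN1; pose proof (SI_ge phi Sp k); unfold k in *; lia).
      assert (Hu1 : Rabs (u - t) < eta) by (eapply Rlt_le_trans; [exact Hu| apply Rmin_l]).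
      assert (Hu2 : Rabs (u - t) < h0) by (eapply Rlt_le_trans; [exact Hu| eapply Rle_trans; [apply Rmin_r| apply Rmin_l]]).
      assert (Hu3 : Rabs (u - t) < dl) by (eapply Rlt_le_trans; [exact Hu| eapply Rle_trans; [apply Rmin_r| apply Rmin_r]]).
      assert (Hk : dP (psi k) g < e) by (apply HN2; unfold k; lia).
      assert (Uu : unit01 u) by apply Htn.
      assert (Du : unit01 u /\ Rabs (u - t) < eta) by auto.
      destruct (JH_path _ _ _ _ _ (Hpsi k)) as [hk [Ik [jk [Hhk [Pk [Iku Ek]]]]]].
      fold u in Iku, Ek.
      assert (Gu : Gam u (psi k)) by (apply (proj2 (P1 u Uu)); apply Hpsi).
      assert (Epl : peq (psi k) (l u)).
      { apply (Hq u); auto. apply (proj2 (proj2 Cl)); auto.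
        pose proof (mnorm_le (psi k) g); lra.
        specialize (Kl u Du Hu3). rewrite (dP_peq_r _ _ _ El) in Kl.
        pose proof (dP_tri (psi k) g (l u)). rewrite (dP_sym g) in H2. lra. }
      apply GPath_iff in Pk. destruct Pk as [Ck [Isk Fk]].
      assert (Hag : forall v, Ik v -> (unit01 v /\ Rabs (v - t) < eta) -> peq (jk v) (l v)).
      { apply (U Gam Ik _ jk l u HD Ck Cl Iku Du). eapply peq_trans; [apply peq_sym; exact Ek| exact Epl]. }
      apply (JH_of_path Gam s t H hk (fun v => Ik v \/ (unit01 v /\ Rabs (v - t) < eta)) (glue Ik jk l)); [exact HD| exact Hhk| | |].
      * apply GPath_iff. split. apply (glue_Cpath Gam Ik _ jk l u); auto. split. now left. rewrite glue_l; auto.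
      * right; auto.
      * apply peq_sym. apply (peq_trans _ (l t)); [apply (glue_r Ik (fun v => unit01 v /\ Rabs (v - t) < eta) jk l t); auto | exact El].
    + intros g Hg. destruct (JH_path _ _ _ _ _ Hg) as [h [I [j [Hh [P [It E]]]]]].
      destruct (extend_path Gam s h I j t HD P It) as [eta [J [K [Heta [PJ [NK AJ]]]]]].
      pose (psi := fun n => if Rlt_dec (Rabs (tn n - t)) eta then J (tn n) else mid).
      exists psi. split.
      * intro n. unfold psi. destruct Rlt_dec as [r|r].
        -- apply (JH_of_path Gam s (tn n) H h K J); auto. apply peq_refl.
        -- apply G_mid. apply (P1 _ (Htn n)).
      * apply pconv_iff. intros eps He.
        apply GPath_iff in PJ. destruct PJ as [[_ [CJ _]] _].
        assert (Kt : K t) by (apply NK; auto; rewrite Rminus_diag, Rabs_R0; auto).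
        destruct (CJ t Kt eps He) as [d [Hd KJ]].
        destruct (lim_eps tn t Hlim (Rmin eta d) ltac:(apply Rmin_pos; auto)) as [N HN].
        exists N. intros n Hn. specialize (HN n Hn). unfold psi.
        assert (Q1 : Rabs (tn n - t) < eta) by (eapply Rlt_le_trans; [exact HN| apply Rmin_l]).
        assert (Q2 : Rabs (tn n - t) < d) by (eapply Rlt_le_trans; [exact HN| apply Rmin_r]).
        destruct Rlt_dec as [_|r]; [|contradiction].
        rewrite (dP_peq_r _ _ (J t)). apply KJ; auto.
        eapply peq_trans; [exact E| apply peq_sym; auto]. Qed.

Lemma part3 Gam s H : DPath Gam -> unit01 s -> PSub H -> (forall h, H h -> Gam s h) ->
  forall (I : R -> Prop), sub_interval I -> forall (tn : nat -> R) (t : R), I t -> (forall n, I (tn n)) -> is_lim_seq tn t ->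
            (forall h g (gn : nat -> M2), H h -> Jst Gam s t h = Some g ->
               (forall n, Jst Gam s (tn n) h = Some (gn n)) -> pconv gn g).
Proof. intros HD Hs HP HHs I [SI1 _] tn t It Itn Hlim h g gn Hh Jg Jgn.
  apply Jst_spec in Jg. destruct Jg as [Ij [j [Pj [Ijt ->]]]].
  destruct (extend_path Gam s h Ij j t HD Pj Ijt) as [eta [J [K [Heta [PJ [NK AJ]]]]]].
  pose proof PJ as PJ'. apply GPath_iff in PJ'. destruct PJ' as [CJ [KS FJ]].
  apply pconv_iff. intros eps He.
  assert (Kt : K t) by (apply NK; auto; rewrite Rminus_diag, Rabs_R0; auto).
  destruct (proj1 (proj2 CJ) t Kt eps He) as [d [Hd KJ]].
  destruct (lim_eps tn t Hlim (Rmin eta d) ltac:(apply Rmin_pos; auto)) as [N HN].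
  exists N. intros n Hn. specialize (HN n Hn).
  assert (Q1 : Rabs (tn n - t) < eta) by (eapply Rlt_le_trans; [exact HN| apply Rmin_l]).
  assert (Q2 : Rabs (tn n - t) < d) by (eapply Rlt_le_trans; [exact HN| apply Rmin_r]).
  assert (Kn : K (tn n)) by (apply NK; auto).
  pose proof (Jst_spec _ _ _ _ _ (Jgn n)) as [In [kn [Pn [Inn En]]]].
  apply GPath_iff in Pn. destruct Pn as [Cn [Ins Fn]].
  assert (peq (kn (tn n)) (J (tn n))).
  { apply (U Gam In K kn J s HD Cn CJ Ins KS); auto. eapply peq_trans; [exact Fn| apply peq_sym; exact FJ]. }
  rewrite En, (dP_peq_l _ _ _ H0), (dP_peq_r _ _ (J t)). apply KJ; auto.
  apply peq_sym; auto. Qed.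

Theorem mainTheorem13 :
  forall (Gam : R -> M2 -> Prop) (s : R) (H : M2 -> Prop),
    DPath Gam -> unit01 s -> PSub H -> (forall h, H h -> Gam s h) ->
    (forall t, unit01 t -> PSub (JH Gam s t H) /\ (forall g, JH Gam s t H g -> Gam t g)) /\
    (FinGen H ->
      ((forall t, unit01 t -> inD (JH Gam s t H)) /\
       (forall (tn : nat -> R) (t : R), unit01 t -> (forall n, unit01 (tn n)) ->
          is_lim_seq tn t -> chab_conv (fun n => JH Gam s (tn n) H) (JH Gam s t H))) /\
      (forall I : R -> Prop, sub_interval I ->
         (forall t, I t -> JInjHom Gam s t H) ->
         (forall t, I t -> inD (JH Gam s t H)) /\
         (forall (tn : nat -> R) (t : R), I t -> (forall n, I (tn n)) -> is_lim_seq tn t ->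
            (forall h g (gn : nat -> M2), H h -> Jst Gam s t h = Some g ->
               (forall n, Jst Gam s (tn n) h = Some (gn n)) -> pconv gn g) /\
            chab_conv (fun n => JH Gam s (tn n) H) (JH Gam s t H)))).
Proof.
  intros Gam s H HD Hs HP HHs. split.
  - apply part1; auto.
  - intros _. pose proof (part2 Gam s H HD Hs HP HHs) as [P2a P2b]. split; [split; auto|].
    intros I HI _. split.
    + intros t It. apply P2a. apply (proj1 HI); auto.
    + intros tn t It Itn Hlim. split.
      * apply (part3 Gam s H HD Hs HP HHs I HI tn t It Itn Hlim).
      * apply P2b; auto. apply (proj1 HI); auto. intro n; apply (proj1 HI); auto.
Qed.
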